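(* For every $k\geq2$ and all integers $d_1,\dots,d_k\geq3$, $$R_{d_1,\dots,d_k}(W_{d_1}\otimes\cdots\otimes W_{d_k})\leq 2^{k-1}(d_1+\cdots+d_k).$$
   Context: Identify $S^d\mathbb{C}^2$ with binary forms of degree $d$ in a basis $\{x,y\}$; $W_d=x^{d-1}y$. The partially symmetric rank $R_{d_1,\dots,d_k}(T)$ of $T\in S^{d_1}\mathbb{C}^2\otimes\cdots\otimes S^{d_k}\mathbb{C}^2$ is the minimal $r$ such that $T=\sum_{i=1}^r v_{i,1}^{\otimes d_1}\otimes\cdots\otimes v_{i,k}^{\otimes d_k}$ with $v_{i,j}\in\mathbb{C}^2$. *)

(* Defs.v *)
From HB Require Import structures.
From mathcomp Require Import all_boot all_order all_algebra.
From mathcomp Require Import reals.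
From mathcomp.real_closed Require Import complex.
Set Implicit Arguments. Unset Strict Implicit. Unset Printing Implicit Defensive.
Import Order.TTheory GRing.Theory Num.Theory.
Local Open Scope ring_scope.

(* An element T of S^{d_1}C^2 (x) ... (x) S^{d_k}C^2 is identified with a
   multihomogeneous form in the variables (x_j, y_j), j < k, of multidegree
   (d_1,...,d_k).  It is represented by its coefficient function:
   T e is the coefficient of the monomial  prod_j x_j^(e j) * y_j^(d j - e j)
   (coefficients with e j > d j for some j are required to be 0). *)
Definition pstensor (F : fieldType) (k : nat) := ('I_k -> nat) -> F.

(* The tensor v_1^{(x)d_1} (x) ... (x) v_k^{(x)d_k}, v_j = (a_j, b_j) = a_j x + b_j y,
   i.e. the form prod_j (a_j x_j + b_j y_j)^(d_j), written coefficientwise. *)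
Definition rank1_term (F : fieldType) (k : nat) (d : 'I_k -> nat)
  (v : 'I_k -> F * F) : pstensor F k :=
  fun e => if [forall j, (e j <= d j)%N] then
             \prod_(j < k) ('C(d j, e j)%:R * (v j).1 ^+ e j * (v j).2 ^+ (d j - e j))
           else 0.

Definition ps_decomp (F : fieldType) (k : nat) (d : 'I_k -> nat)
  (T : pstensor F k) (r : nat) : Prop :=
  exists v : 'I_r -> 'I_k -> F * F,
    forall e, T e = \sum_(i < r) rank1_term d (v i) e.

Definition is_psrank (F : fieldType) (k : nat) (d : 'I_k -> nat)
  (T : pstensor F k) (r : nat) : Prop :=
  ps_decomp d T r /\ forall m, ps_decomp d T m -> (r <= m)%N.

(* W_{d_1} (x) ... (x) W_{d_k} = prod_j x_j^(d_j - 1) y_j. *)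
Definition W_tensor (F : fieldType) (k : nat) (d : 'I_k -> nat) : pstensor F k :=
  fun e => if [forall j, (e j == (d j).-1)%N] then 1 else 0.

(* Main.v *)
Require Import Defs.
From HB Require Import structures.
From mathcomp Require Import all_boot all_order all_algebra.
From mathcomp Require Import reals.
From mathcomp.real_closed Require Import complex.
From mathcomp Require Import zify ring.
From Stdlib Require Import Classical.
Set Implicit Arguments. Unset Strict Implicit. Unset Printing Implicit Defensive.
Import Order.TTheory GRing.Theory Num.Theory.
Local Open Scope ring_scope.

Lemma weights (C : numFieldType) (N k : nat) :
  exists w : 'I_N.+1 -> C, forall n : nat, (n < N.+1)%N ->
    \sum_(m < N.+1) w m * (m.+1%:R) ^+ (k + n.*2) = (n == 0%N)%:R.
Proof.
pose s : 'rV[C]_N.+1 := \row_(j < N.+1) ((j.+1 ^ 2)%N%:R).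
pose V := Vandermonde N.+1 s.
have hV : V \in unitmx.
  rewrite unitmxE det_Vandermonde unitfE; apply/prodf_neq0 => i _.
  apply/prodf_neq0 => j ij; rewrite !mxE -natrB; last first.
    by rewrite leq_exp2r // ltnW.
  by rewrite pnatr_eq0 subn_eq0 -ltnNge ltn_exp2r.
pose u := invmx V *m (delta_mx 0 0 : 'cV[C]_N.+1).
have hu : V *m u = delta_mx 0 0 by rewrite /u mulmxA mulmxV // mul1mx.
exists (fun m => u m 0 / (m.+1%:R) ^+ k) => n hn.
have := congr1 (fun A : 'cV[C]_N.+1 => A (Ordinal hn) 0) hu.
rewrite !mxE /= eqxx andbT => <-.
apply: eq_bigr => m _; rewrite !mxE exprD mulrA divfK; last first.
  by rewrite expf_neq0 // pnatr_eq0.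
rewrite mulrC -natrX -natrX -expnM. by rewrite mulnC -muln2.
Qed.

Definition scalev (C : numClosedFieldType) (k : nat) (d : 'I_k -> nat)
  (j0 : 'I_k) (c : C) (v : 'I_k -> C * C) : 'I_k -> C * C :=
  fun j => if j == j0 then ((d j0).-root c * (v j).1, (d j0).-root c * (v j).2)
           else v j.

Lemma scalevE (C : numClosedFieldType) (k : nat) (d : 'I_k -> nat)
  (j0 : 'I_k) (hd : (0 < d j0)%N) (c : C) (v : 'I_k -> C * C) e :
  rank1_term d (scalev d j0 c v) e = c * rank1_term d v e.
Proof.
rewrite /rank1_term; case: ifP => [/forallP he|]; last by rewrite mulr0.
rewrite (bigD1 j0) // [in RHS](bigD1 j0) //= mulrA; congr (_ * _).
  rewrite /scalev eqxx /= !exprMn.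
  set rho := (d j0).-root c. set a := (v j0).1. set b := (v j0).2.
  have hc : c = rho ^+ e j0 * rho ^+ (d j0 - e j0).
    by rewrite -exprD subnKC ?he // rootCK.
  rewrite [in RHS]hc; ring.
by apply: eq_bigr => j /negPf hj; rewrite /scalev hj.
Qed.

Lemma decomp_fin (C : numClosedFieldType) (k : nat) (d : 'I_k -> nat)
  (j0 : 'I_k) (hd : (0 < d j0)%N) (T : pstensor C k) (I : finType)
  (c : I -> C) (v : I -> 'I_k -> C * C) :
  (forall e, T e = \sum_(i : I) c i * rank1_term d (v i) e) ->
  ps_decomp d T #|I|.
Proof.
move=> hT; exists (fun i => scalev d j0 (c (enum_val i)) (v (enum_val i))) => e.
rewrite hT (big_enum_val (A := predT)) /=.
by apply: eq_bigr => i _; rewrite scalevE.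
Qed.

Lemma psrank_min (F : fieldType) (k : nat) (d : 'I_k -> nat) (T : pstensor F k) n :
  ps_decomp d T n -> exists r, is_psrank d T r /\ (r <= n)%N.
Proof.
elim/ltn_ind: n => n IH hn.
case: (classic (exists m, (m < n)%N /\ ps_decomp d T m)).
  move=> [m [hm hdm]]; have [r [hr hrm]] := IH m hm hdm.
  by exists r; split => //; apply: leq_trans hrm (ltnW hm).
move=> hno; exists n; split => //; split => // m hm.
rewrite leqNgt; apply/negP => hlt; apply: hno; by exists m.
Qed.

Lemma signsum (C : fieldType) (k : nat) (d e : 'I_k -> nat)
  (he : forall j, (e j <= d j)%N) (tau : C) :
  \sum_(f : {ffun 'I_k -> bool}) (\prod_j (-1) ^+ (f j)) *
     rank1_term d (fun j => (1, (-1) ^+ (f j) * tau)) e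
  = \prod_j ('C(d j, e j)%:R * tau ^+ (d j - e j) * (1 - (-1) ^+ (d j - e j))).
Proof.
have hE : [forall j, (e j <= d j)%N] by apply/forallP.
rewrite /rank1_term hE.
symmetry.
transitivity (\prod_j \sum_(b : bool) ((-1 : C) ^+ b *
   ('C(d j, e j)%:R * (1 : C, (-1) ^+ b * tau).1 ^+ e j * (1 : C, (-1) ^+ b * tau).2 ^+ (d j - e j)))).
  apply: eq_bigr => j _; rewrite big_bool /= !expr1n !exprMn expr1 expr0.
  rewrite expr1n; move: (_ ^+ (d j - e j)) (_ ^+ (d j - e j)) => x y. ring.
rewrite bigA_distr_bigA; apply: eq_bigr => f _.
by rewrite big_split.
Qed.

Lemma key_lemma (C : fieldType) (k : nat) (d : 'I_k -> nat)
  (hd : forall j, (0 < d j)%N) (N : nat) (w : 'I_N.+1 -> C)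
  (hw : forall n : nat, (n < N.+1)%N ->
     \sum_(m < N.+1) w m * (m.+1%:R) ^+ (k + n.*2) = (n == 0%N)%:R)
  (hN : (((\sum_j d j) - k)./2 <= N)%N) (e : 'I_k -> nat) :
  \sum_(m < N.+1) w m * (\sum_(f : {ffun 'I_k -> bool}) (\prod_j (-1) ^+ (f j)) *
     rank1_term d (fun j => (1, (-1) ^+ (f j) * (m.+1)%:R)) e)
  = W_tensor C d e * (2 ^ k * \prod_j d j)%N%:R.
Proof.
have Wone : [forall j, e j == (d j).-1] -> forall j, (d j - e j = 1)%N.
  move=> /forallP h j; have := h j; have := hd j; move=> ? /eqP ->; lia.
case: (boolP [forall j, (e j <= d j)%N]) => hE; last first.
  rewrite /W_tensor; case: ifP => [hW|_].
    case/negP: hE; apply/forallP => j; have := Wone hW j; lia.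
  rewrite mul0r big1 // => m _; rewrite big1 ?mulr0 // => f _.
  by rewrite /rank1_term (negbTE hE) mulr0.
have he : forall j, (e j <= d j)%N by apply/forallP.
have -> : \sum_(m < N.+1) w m * (\sum_(f : {ffun 'I_k -> bool}) (\prod_j (-1) ^+ (f j)) *
     rank1_term d (fun j => (1, (-1) ^+ (f j) * (m.+1)%:R)) e) =
   \sum_(m < N.+1) w m * \prod_j ('C(d j, e j)%:R * (m.+1%:R : C) ^+ (d j - e j) * (1 - (-1) ^+ (d j - e j))).
  by apply: eq_bigr => m _; congr (_ * _); apply: signsum.
case: (boolP [forall j, odd (d j - e j)]) => hodd; last first.
  rewrite /W_tensor; case: ifP => [hW|_].
    case/negP: hodd; apply/forallP => j; by rewrite Wone.
  move/forallPn: hodd => [j0 hj0].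
  rewrite mul0r big1 // => m _; rewrite (bigD1 j0) //= -signr_odd (negbTE hj0).
  by rewrite expr0 subrr !(mulr0, mul0r).
set n := (\sum_j (d j - e j)./2)%N.
have hg j : (d j - e j = 1 + ((d j - e j)./2).*2)%N.
  by rewrite -{1}(odd_double_half (d j - e j)) (forallP hodd j).
have hG : (\sum_j (d j - e j) = k + n.*2)%N.
  rewrite (eq_bigr _ (fun j _ => hg j)) big_split /= sum1_card card_ord.
  rewrite /n -muln2 big_distrl /=; congr (_ + _)%N; apply: eq_bigr => j _; by rewrite muln2.
have hP m : \prod_j ('C(d j, e j)%:R * (m.+1%:R : C) ^+ (d j - e j) * (1 - (-1) ^+ (d j - e j)))
   = (\prod_j 'C(d j, e j))%N%:R * 2 ^+ k * m.+1%:R ^+ (k + n.*2).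
  rewrite (eq_bigr (fun j => 'C(d j, e j)%:R * (m.+1%:R : C) ^+ (d j - e j) * 2)); last first.
    move=> j _; rewrite -signr_odd (forallP hodd j) expr1 opprK.
    by move: ('C(_, _)%:R) (_ ^+ _) => x y; ring.
  rewrite !big_split /= natr_prod prodr_const card_ord prodrXr hG.
  by move: (\prod_(i < k) _) (_ ^+ (k + _)) (2 ^+ k) => x y z; ring.
rewrite (eq_bigr (fun m : 'I_N.+1 => (\prod_j 'C(d j, e j))%N%:R * 2 ^+ k *
   (w m * (m.+1%:R : C) ^+ (k + n.*2)))); last first.
  move=> m _; rewrite hP; move: (w m) (_%:R) (_ ^+ (k + _)) => x y z; ring.
rewrite -mulr_sumr.
have hn : (n < N.+1)%N.
  have : (\sum_j (d j - e j) <= \sum_j d j)%N by apply: leq_sum => j _; apply: leq_subr.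
  rewrite hG => hle; lia.
rewrite hw //.
case: (boolP (n == 0%N)) => hn0.
  have h1 j : (d j - e j = 1)%N.
    move: hn0; rewrite /n sum_nat_eq0 => /forallP/(_ j)/eqP h.
    by rewrite hg h.
  have hW : [forall j, e j == (d j).-1].
    apply/forallP => j; have := h1 j; have := he j; move=> ? ?; apply/eqP; lia.
  rewrite /W_tensor hW mulr1 mul1r natrM natrX mulrC; congr (_ * _).
  congr (_%:R); apply: eq_bigr => j _.
  have -> : e j = (d j - 1)%N by have := h1 j; have := he j; lia.
  by rewrite bin_sub ?bin1 // hd.
rewrite /W_tensor; case: ifP => [hW|_]; last by rewrite mulr0 mul0r.
exfalso; move/negP: hn0; apply; rewrite /n sum_nat_eq0; apply/forallP => j.
by rewrite (Wone hW j).
Qed.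

Lemma main_decomp (C : numClosedFieldType) (k : nat) (hk : (2 <= k)%N)
  (d : 'I_k -> nat) (hd : forall j, (3 <= d j)%N) :
  ps_decomp d (@W_tensor C k d) ((((\sum_j d j) - k)./2).+1 * 2 ^ k).
Proof.
set D := (\sum_j d j)%N; set N := ((D - k)./2)%N.
have [w hw] := weights C N k.
pose K : C := (2 ^ k * \prod_j d j)%N%:R.
have K0 : K != 0.
  rewrite pnatr_eq0 -lt0n muln_gt0 expn_gt0 /=.
  by rewrite prodn_gt0 // => j; apply: leq_trans (hd j).
have k0 : (0 < k)%N by apply: leq_trans hk.
pose j0 : 'I_k := Ordinal k0.

have -> : (N.+1 * 2 ^ k)%N = #|{: 'I_N.+1 * {ffun 'I_k -> bool}}| by rewrite card_prod card_ord card_ffun card_bool card_ord.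
apply: (decomp_fin (j0 := j0) _ (c := fun p : ('I_N.+1 * {ffun 'I_k -> bool})%type => w p.1 * (\prod_j (-1) ^+ (p.2 j)) / K)
   (v := fun p : ('I_N.+1 * {ffun 'I_k -> bool})%type => fun j => (1, (-1) ^+ (p.2 j) * (p.1.+1)%:R))).
  by apply: leq_trans (hd j0).
move=> e.
have key : \sum_(m < N.+1) w m * (\sum_(f : {ffun 'I_k -> bool}) (\prod_j (-1) ^+ (f j)) *
     rank1_term d (fun j => (1, (-1) ^+ (f j) * (m.+1)%:R)) e) = W_tensor C d e * K.
  apply: key_lemma => //; by move=> j; apply: leq_trans (hd j).
apply: (mulIf K0); rewrite -key mulr_suml.
under eq_bigr => m _ do rewrite mulr_sumr.
rewrite pair_bigA /=; apply: eq_bigr => p _.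
move: (w p.1) (\prod_(j < k) _) (rank1_term _ _ _) => a b c.
by rewrite [RHS]mulrAC divfK // mulrA.
Qed.


Theorem theorem3p6 (R : realType) (k : nat) (hk : (2 <= k)%N)
  (d : 'I_k -> nat) (hd : forall j, (3 <= d j)%N) :
  exists r : nat, @is_psrank R[i] k d (@W_tensor R[i] k d) r /\
    (r <= 2 ^ k.-1 * \sum_(j < k) d j)%N.
Proof.
have [r [hr hrle]] := psrank_min (@main_decomp R[i] k hk d hd).
exists r; split => //; apply: leq_trans hrle _.
have hD : (3 * k <= \sum_(j < k) d j)%N.
  have : (\sum_(j < k) 3 <= \sum_(j < k) d j)%N by apply: leq_sum => j _; apply: hd.
  by rewrite sum_nat_const card_ord mulnC.
have e2 : (2 ^ k = 2 * 2 ^ k.-1)%N by rewrite -expnS prednK //; apply: leq_trans hk.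
rewrite e2 mulnA [in X in (_ <= X)%N]mulnC leq_mul2r; apply/orP; right.
have hS : (\sum_j d j = \sum_(j < k) d j)%N := erefl.
rewrite hS; lia.
Qed.
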